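(* Let $P_c$ and $P_d$ be the programs defined in the context, built with the same ordering $\alpha$ of $X$, and let $A'\subseteq A^+$. Then $P_d$ has a supported model $M$ with $A'=\{\vec a\in A^+: a\in M\}$ if and only if $P_c$ has a supported model $N$ with $A'=\{\vec a\in A^+: a\in N\}$.
   Context: Delete-relaxed planning. Let $X$ be a finite set of atomic propositions, $A^+$ a finite set of actions, and $G\subseteq X$. Each action $\vec a\in A^+$ has $pre(\vec a),add(\vec a)\subseteq X$; there are no delete effects and the initial state is $\emptyset$. For each action $\vec a$ there is an action atom $a$. Further atoms are: - $\mathrm{dep}(p,q)$ for $p,q\in X$; - $\mathrm{ws}(a,p)$ for actions $\vec a$ and $p\in X$; - a special atom $f$. All these atoms are pairwise distinct and distinct from $X$. Logic programs. A normal rule has the form $h\leftarrow b_1,\dots,b_n,\mathtt{not}\,c_1,\dots,\mathtt{not}\,c_m$, and a choice rule has the form $\{h\}\leftarrow(\text{same body})$; the body may be empty. An interpretation $I$ satisfies a body if all $b_i\in I$ and no $c_j\in I$. $I$ is a model if every normal rule whose body $I$ satisfies has its head in $I$. The supporting rules w.r.t. $I$ are: - the normal rules whose body $I$ satisfies; - the choice rules whose body $I$ satisfies and whose head is in $I$. A model $I$ is supported if $I$ equals the set of heads of its supporting rules. Vertex elimination. For a digraph $(V',E')$ and vertex $v$: - the fill-in is $F(v)=\{(x,y):(x,v),(v,y)\in E',x\ne y\}$; - the $v$-elimination graph deletes $v$ together with its incident arcs and adds $F(v)$. For an ordering $\alpha:\{1,\dots,n\}\to V$ of a digraph $\mathcal{G}$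 with $n$ vertices, set $\mathcal{G}_0=\mathcal{G}$ and let $\mathcal{G}_i$ be the $\alpha(i)$-elimination graph of $\mathcal{G}_{i-1}$ for $i=1,\dots,n-1$. Let $F_{i-1}(\alpha(i))$ be the fill-in of $\alpha(i)$ in $\mathcal{G}_{i-1}$. The vertex elimination graph $\mathcal{G}^*_\alpha=(V,E^* )$ has as arcs the original arcs together with all $F_{i-1}(\alpha(i))$. Let $E=\{(p,q)\in X\times X:\exists \vec a\in A^+,\ p\in add(\vec a),\ q\in pre(\vec a)\}$ and $\mathcal{G}=(X,E)$. Let $n=|X|$, fix an ordering $\alpha$ of $X$, and let $E^*$ be the arc set of $\mathcal{G}^*_\alpha$. Define the rule groups: - (C5) $\mathrm{dep}(p,q)\leftarrow\mathrm{dep}(p,\alpha(i)),\mathrm{dep}(\alpha(i),q)$ for each $i\in\{1,\dots,n-1\}$ and each $(p,q)\in F_{i-1}(\alpha(i))$; - (C6) $f\leftarrow \mathrm{dep}(p,q),\mathrm{dep}(q,p),\mathtt{not}\,f$ for all $p,q\in X$ (possibly $p=q$) with $(p,q),(q,p)\in E^*$. Program $P_c$ (causal) consists of (C5), (C6), and: - (C1) $\{\mathrm{dep}(p,q)\}\leftarrow q$ for each $(p,q)\in E$; - (C2) $\{\mathrm{ws}(a,p)\}\leftarrow \mathrm{dep}(p,q_1),\dots,\mathrm{dep}(p,q_k)$ for each $\vec a\in A^+$ and $p\in add(\vec a)$, where $pre(\vec a)=\{q_1,\dots,q_k\}$; - (C3) $p\leftarrow \mathrm{ws}(a,p)$ and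 $a\leftarrow\mathrm{ws}(a,p)$ for each $\vec a\in A^+$ and $p\in add(\vec a)$; - (C4) $g\leftarrow\mathtt{not}\,g$ for each $g\in G$. Program $P_d$ (diagnostic) consists of (C5), (C6), and: - (D1) $\{p\}\leftarrow$ (empty body) for each $p\in X$; - (D2) $\{\mathrm{ws}(a,p)\}\leftarrow p$ for each $\vec a\in A^+$ and $p\in add(\vec a)$; - (D3) $f\leftarrow p,\mathtt{not}\,\mathrm{ws}(a_1,p),\dots,\mathtt{not}\,\mathrm{ws}(a_m,p),\mathtt{not}\,f$ for each $p\in X$, where $\vec a_1,\dots,\vec a_m$ are all actions $\vec a$ with $p\in add(\vec a)$; - (D4) $\mathrm{dep}(p,q)\leftarrow\mathrm{ws}(a,p)$ for each $\vec a\in A^+$, $p\in add(\vec a)$ and $q\in pre(\vec a)$; - (D5) $q\leftarrow\mathrm{dep}(p,q)$ for each $(p,q)\in E$; - (D6) $a\leftarrow\mathrm{ws}(a,p)$ for each $\vec a\in A^+$ and $p\in add(\vec a)$; - (D7) $g\leftarrow\mathtt{not}\,g$ for each $g\in G$. *)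

(* Defs.v *)
From mathcomp Require Import all_boot.
From Stdlib Require List.
Set Implicit Arguments.
Unset Strict Implicit.
Unset Printing Implicit Defensive.

(* A rule: [rchoice = false] is a normal rule  h <- pos, not neg;
           [rchoice = true]  is a choice rule {h} <- pos, not neg. *)
Record rule (atom : Type) := Rule {
  rchoice : bool;
  rhead : atom;
  rpos : list atom;
  rneg : list atom }.

Definition normal {atom : Type} (h : atom) (pos neg : list atom) :=
  Rule false h pos neg.
Definition choice {atom : Type} (h : atom) (pos neg : list atom) :=
  Rule true h pos neg.

Definition program (atom : Type) := rule atom -> Prop.
Definition interp (atom : Type) := atom -> Prop.

Definition body_sat {atom : Type} (I : interp atom) (r : rule atom) : Prop :=
  List.Forall I (rpos r) /\ List.Forall (fun c => ~ I c) (rneg r).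

Definition is_model {atom : Type} (P : program atom) (I : interp atom) : Prop :=
  forall r, P r -> rchoice r = false -> body_sat I r -> I (rhead r).

Definition supporting {atom : Type} (P : program atom) (I : interp atom)
    (r : rule atom) : Prop :=
  P r /\ body_sat I r /\ (rchoice r = false \/ I (rhead r)).

Definition supported_model {atom : Type} (P : program atom) (I : interp atom)
  : Prop :=
  is_model P I /\
  forall x, I x <-> exists r, supporting P I r /\ rhead r = x.

(* X = propositions, A = actions (A^+). Constructors are pairwise distinct. *)
Inductive atom (X A : Type) :=
  | AX of X
  | AA of A
  | Dep of X & X
  | Ws of A & X
  | Ff.
Arguments Ff {X A}.
Arguments AX {X A}.
Arguments AA {X A}.
Arguments Dep {X A}.
Arguments Ws {X A}.

Section Encodings.
Variables (X A : finType) (pre add : A -> {set X}) (G : {set X}).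

Definition Earcs : {set X * X} :=
  [set pq | [exists a, (pq.1 \in add a) && (pq.2 \in pre a)]].

Definition fillin (E' : {set X * X}) (v : X) : {set X * X} :=
  [set xy | [&& (xy.1, v) \in E', (v, xy.2) \in E' & xy.1 != xy.2]].

(* arcs of the v-elimination graph: delete arcs incident to v, add F(v).
   (Vertex sets need not be tracked: all arcs are between remaining vertices.) *)
Definition elim_arcs (E' : {set X * X}) (v : X) : {set X * X} :=
  [set xy in E' | (xy.1 != v) && (xy.2 != v)] :|: fillin E' v.

(* For an ordering s = [alpha(1); ...; alpha(n)], the list of pairs
   (alpha(i), arcs of G_{i-1}) for i = 1..n. *)
Fixpoint elim_steps (E' : {set X * X}) (s : seq X) : seq (X * {set X * X}) :=
  match s with
  | [::] => [::]
  | v :: s' => (v, E') :: elim_steps (elim_arcs E' v) s'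
  end.

Variable alpha : seq X.

(* steps i = 1..n-1 : pairs (alpha(i), arcs of G_{i-1}) *)
Definition steps : seq (X * {set X * X}) :=
  take (size alpha).-1 (elim_steps Earcs alpha).

Definition Estar : {set X * X} :=
  [set xy | (xy \in Earcs) || has (fun st => xy \in fillin st.2 st.1) steps].

Notation atm := (atom X A).

Definition C5 (r : rule atm) : Prop :=
  exists st, exists p q, List.In st steps /\ (p, q) \in fillin st.2 st.1 /\
    r = normal (Dep p q) [:: Dep p st.1; Dep st.1 q] [::].

Definition C6 (r : rule atm) : Prop :=
  exists p q, (p, q) \in Estar /\ (q, p) \in Estar /\
    r = normal Ff [:: Dep p q; Dep q p] [:: Ff].

Definition Pc : program atm := fun r =>
  (exists p q, (p, q) \in Earcs /\ r = choice (Dep p q) [:: AX q] [::]) \/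
  (exists a p, p \in add a /\
     r = choice (Ws a p) [seq Dep p q | q <- enum (pre a)] [::]) \/
  (exists a p, p \in add a /\
     (r = normal (AX p) [:: Ws a p] [::] \/ r = normal (AA a) [:: Ws a p] [::])) \/
  (exists g, g \in G /\ r = normal (AX g) [::] [:: AX g]) \/
  C5 r \/ C6 r.

Definition Pd : program atm := fun r =>
  (exists p, r = choice (AX p) [::] [::]) \/
  (exists a p, p \in add a /\ r = choice (Ws a p) [:: AX p] [::]) \/
  (exists p, r = normal Ff [:: AX p]
       ([seq Ws a p | a <- enum [pred a | p \in add a]] ++ [:: Ff])) \/
  (exists a p q, p \in add a /\ q \in pre a /\ r = normal (Dep p q) [:: Ws a p] [::]) \/
  (exists p q, (p, q) \in Earcs /\ r = normal (AX q) [:: Dep p q] [::]) \/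
  (exists a p, p \in add a /\ r = normal (AA a) [:: Ws a p] [::]) \/
  (exists g, g \in G /\ r = normal (AX g) [::] [:: AX g]) \/
  C5 r \/ C6 r.

End Encodings.

(* Main.v *)
Require Import Defs.
From mathcomp Require Import all_boot zify.
From Stdlib Require Import Classical Lia.
From Stdlib Require ClassicalEpsilon.
Set Implicit Arguments.
Unset Strict Implicit.
Unset Printing Implicit Defensive.

Lemma In_mem (T : eqType) (x : T) (s : seq T) : List.In x s <-> x \in s.
Proof.
elim: s => [|y s IH] //=; rewrite in_cons; split.
- by case=> [->|/IH ->]; rewrite ?eqxx ?orbT.
- by case/orP=> [/eqP ->|/IH]; [left|right].
Qed.

Lemma size_elim_steps (X : finType) (E : {set X * X}) s :
  size (elim_steps E s) = size s.
Proof. by elim: s E => [|v s IH] E //=; rewrite IH. Qed.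

Lemma nth_elim_steps (X : finType) (E : {set X * X}) s i x0 e0 :
  i < size s ->
  nth (x0, e0) (elim_steps E s) i = (nth x0 s i, foldl (@elim_arcs X) E (take i s)).
Proof.
elim: s E i => [|v s IH] E [|i] //= Hi.
by rewrite IH.
Qed.

Section Elim.
Variables (X A : finType) (pre add : A -> {set X}) (alpha : seq X).
Hypothesis Hu : uniq alpha.
Hypothesis Hall : forall x, x \in alpha.

Definition El i := foldl (@elim_arcs X) (Earcs pre add) (take i alpha).
Definition pos (x : X) := index x alpha.

Lemma pos_lt x : pos x < size alpha.
Proof. by rewrite /pos index_mem. Qed.

Lemma pos_inj x y : pos x = pos y -> x = y.
Proof.
move=> H; by rewrite -(nth_index x (Hall x)) -(nth_index x (Hall y)) -/(pos x) -/(pos y) H.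
Qed.

Lemma El0 : El 0 = Earcs pre add.
Proof. by rewrite /El take0. Qed.

Lemma El_succ i x0 : i < size alpha -> El i.+1 = elim_arcs (El i) (nth x0 alpha i).
Proof. by move=> Hi; rewrite /El (take_nth x0 Hi) foldl_rcons. Qed.

Lemma step_spec st : List.In st (steps pre add alpha) ->
  pos st.1 < (size alpha).-1 /\ st.2 = El (pos st.1).
Proof.
case: st => v E /In_mem /(nthP (v, E)) [i Hi Hnth].
have Hs : size (steps pre add alpha) = (size alpha).-1.
  by rewrite /steps size_takel // size_elim_steps leq_pred.
rewrite Hs in Hi.
have Hi' : i < size alpha by apply: (leq_trans Hi); rewrite leq_pred.
move: Hnth; rewrite /steps nth_take // nth_elim_steps // => -[<- <-] /=.
by rewrite /pos index_uniq.
Qed.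

Lemma step_mk v : pos v < (size alpha).-1 -> List.In (v, El (pos v)) (steps pre add alpha).
Proof.
move=> Hv; apply/In_mem/(nthP (v, El (pos v))).
have Hs : size (steps pre add alpha) = (size alpha).-1.
  by rewrite /steps size_takel // size_elim_steps leq_pred.
exists (pos v); first by rewrite Hs.
by rewrite /steps nth_take // nth_elim_steps ?pos_lt // /pos nth_index.
Qed.

Lemma persist i j x y : i <= j -> j <= size alpha -> (x, y) \in El i ->
  (forall k, i <= k -> k < j -> k != pos x /\ k != pos y) -> (x, y) \in El j.
Proof.
move=> Hij Hj Hin Hk.
elim: j Hij Hj Hk => [|j IH] Hij Hj Hk.
  by move: Hij; rewrite leqn0 => /eqP <-.
case: (ltngtP i j.+1) Hij => // [Hlt _|<- _]; last by [].
have Hj' : j < size alpha by [].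
have H1 : (x, y) \in El j.
  apply: IH => //; [by apply: ltnW | by move=> k H1 H2; apply: Hk => //; apply: ltnW].
rewrite (El_succ x Hj') /elim_arcs inE; apply/orP; left.
rewrite inE H1 /=.
have [Hx Hy] := Hk j Hlt (ltnSn j).
apply/andP; split; apply/negP => /eqP Heq.
- by move: Hx; rewrite Heq /pos index_uniq ?eqxx.
- by move: Hy; rewrite Heq /pos index_uniq ?eqxx.
Qed.

Lemma fill_El v x y : (x, y) \in fillin (El (pos v)) v -> (x, y) \in El (pos v).+1.
Proof.
move=> H; rewrite (El_succ v (pos_lt v)) /pos nth_index // /elim_arcs inE.
by rewrite -/(pos v) H orbT.
Qed.

End Elim.

Section Key.
Variables (X A : finType) (pre add : A -> {set X}) (alpha : seq X).
Hypothesis Hu : uniq alpha.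
Hypothesis Hall : forall x, x \in alpha.
Variables (Dd : X -> X -> Prop) (Sx : X -> Prop).
Hypothesis H_closed : forall v p q, pos alpha v < (size alpha).-1 ->
  (p, q) \in fillin (El pre add alpha (pos alpha v)) v -> Dd p v -> Dd v q -> Dd p q.
Hypothesis H_no2 : forall p q, Dd p q -> Dd q p -> False.
Hypothesis H_supp : forall p q, Dd p q ->
  ((p, q) \in Earcs pre add /\ Sx q) \/
  exists v, pos alpha v < (size alpha).-1 /\
    (p, q) \in fillin (El pre add alpha (pos alpha v)) v /\ Dd p v /\ Dd v q.

Local Notation pos := (pos alpha).
Local Notation El := (El pre add alpha).
Local Notation n := (size alpha).

Lemma plt x : pos x < n.
Proof. exact: pos_lt Hall x. Qed.

Lemma noloop p : ~ Dd p p.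
Proof. by move=> H; apply: (H_no2 H H). Qed.

Definition Karc x y := Dd x y /\ (x, y) \in El (minn (pos x) (pos y)).
Definition Kb x y : bool := if ClassicalEpsilon.excluded_middle_informative (Karc x y) then true else false.
Lemma KbP x y : reflect (Karc x y) (Kb x y).
Proof. by rewrite /Kb; case: ClassicalEpsilon.excluded_middle_informative => H; constructor. Qed.

Lemma pos_neq x y : x != y -> pos x != pos y.
Proof. by move=> Hxy; apply/eqP => /(pos_inj Hall) /eqP; rewrite (negbTE Hxy). Qed.

Lemma Dd_neq x y : Dd x y -> x != y.
Proof. by move=> H; apply/eqP => E; subst; apply: (noloop H). Qed.

Lemma pivot u m w : Karc u m -> Karc m w -> pos m < pos u -> pos m < pos w ->
  u != w -> Karc u w.
Proof.
move=> [Dum Eum] [Dmw Emw] Hu' Hw' Huw.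
have Hm : pos m < n.-1.
  by apply: (leq_trans Hu'); rewrite -ltnS prednK ?plt // (leq_ltn_trans _ (plt u)).
move: Eum Emw; rewrite (minn_idPr (ltnW Hu')) (minn_idPl (ltnW Hw')) => Eum Emw.
have Hf : (u, w) \in fillin (El (pos m)) m by rewrite inE /= Eum Emw Huw.
split; first by apply: (H_closed Hm Hf).
apply: (persist Hu (i := (pos m).+1)).
- by rewrite leq_min Hu' Hw'.
- by rewrite geq_min ltnW ?plt.
- by apply: fill_El.
- move=> k H1 H2; move: H2; rewrite leq_min => /andP [H2 H3].
  by rewrite !neq_ltn H2 H3.
Qed.

Lemma nocycle : forall N c, size c <= N -> cycle Kb c -> c = [::].
Proof.
elim=> [|N IH] c; first by case: c.
case: c => [//|x0 c0] Hs Hc.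
set c := x0 :: c0 in Hs Hc *.
have x0c : x0 \in c by rewrite mem_head.
case: (arg_minnP pos x0c) => m mc mmin.
case: (rot_to mc) => i s' Hrot.
have Hc' : cycle Kb (m :: s') by rewrite -Hrot rot_cycle.
have Hsz : size (m :: s') = size c by rewrite -Hrot size_rot.
have Hmem : forall z, z \in m :: s' -> z \in c by move=> z; rewrite -Hrot mem_rot.
exfalso; clear Hrot.
case: s' Hc' Hsz Hmem => [|z t] Hc' Hsz Hmem.
  by move: Hc' => /= /andP [/KbP [Hmm _] _]; apply: (noloop Hmm).
move: Hc'; rewrite /= rcons_path => /andP [/KbP Kmz /andP [Hpt /KbP Krm]].
set r := last z t in Krm.
case: (eqVneq z r) => Hzr.
  by rewrite -Hzr in Krm; apply: (H_no2 Kmz.1 Krm.1).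
have Hlt : forall y, y \in c -> m != y -> pos m < pos y.
  move=> y yc Hmy; rewrite ltn_neqAle mmin // andbT.
  exact: pos_neq.
have zc : z \in c by apply: Hmem; rewrite !inE eqxx orbT.
have rc : r \in c by apply: Hmem; rewrite inE mem_last orbT.
have Hmr : m != r by rewrite eq_sym; apply: (Dd_neq Krm.1).
have Hmz : m != z by apply: (Dd_neq Kmz.1).
have Krz : Karc r z.
  apply: (pivot Krm Kmz); [exact: Hlt | exact: Hlt | by rewrite eq_sym].
have : z :: t = [::].
  apply: IH.
  - by move: Hs; rewrite -Hsz /=.
  - by rewrite /= rcons_path Hpt; apply/KbP.
by [].
Qed.

Definition Kreach x y := [exists z, Kb x z && connect Kb z y].

Lemma Kreach_arc x y : Karc x y -> Kreach x y.
Proof. by move=> H; apply/existsP; exists y; rewrite connect0 andbT; apply/KbP. Qed.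

Lemma Kreach_trans x y z : Kreach x y -> Kreach y z -> Kreach x z.
Proof.
move=> /existsP [a /andP [Ha Cay]] /existsP [b /andP [Hb Cbz]].
apply/existsP; exists a; rewrite Ha /=.
apply: (connect_trans Cay); apply: (connect_trans _ Cbz); exact: connect1.
Qed.

Lemma Kreach_irr x : ~ Kreach x x.
Proof.
move=> /existsP [z /andP [Hxz /connectP [p Hp Hx]]].
have : cycle Kb (z :: p) by rewrite /= rcons_path Hp -Hx Hxz.
by move/(nocycle (leqnn _)).
Qed.

Definition succS x := [set z | Kreach x z].
Definition predS x := [set z | Kreach z x].

Lemma succ_lt x v : Kreach x v -> #|succS v| < #|succS x|.
Proof.
move=> Hxv; apply: proper_card; apply/properP; split.
- by apply/subsetP => z; rewrite !inE => Hvz; apply: (Kreach_trans Hxv).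
- by exists v; rewrite !inE //; apply/negP; apply: Kreach_irr.
Qed.

Lemma pred_lt x v : Kreach v x -> #|predS v| < #|predS x|.
Proof.
move=> Hvx; apply: proper_card; apply/properP; split.
- by apply/subsetP => z; rewrite !inE => Hzv; apply: (Kreach_trans Hzv).
- by exists v; rewrite !inE //; apply/negP; apply: Kreach_irr.
Qed.

Lemma supp' p q : Dd p q ->
  (p, q) \in Earcs pre add \/
  exists v, [/\ pos v < n.-1, (p, v) \in El (pos v), (v, q) \in El (pos v),
    Dd p v & Dd v q].
Proof.
move=> H. have := H_supp H. case.
  by case=> E _; left.
case=> v [Hv [Hf [Hpv Hvq]]]; right.
by exists v; move: Hf; rewrite inE /= => /andP [E1 /andP [E2 _]]; split.
Qed.

Lemma base_K p q : (p, q) \in Earcs pre add -> Dd p q -> Kreach p q.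
Proof.
move=> E D; apply: Kreach_arc; split => //.
apply: (persist Hu (i := 0)) => //; first by rewrite geq_min ltnW ?plt.
  by rewrite El0.
by move=> k _; rewrite leq_min => /andP [H1 H2]; rewrite !neq_ltn H1 H2.
Qed.

Lemma low_K p q v : (p, v) \in El (pos v) -> (v, q) \in El (pos v) -> Dd p v -> Dd v q ->
  pos v < pos p -> pos v < pos q -> Kreach p q.
Proof.
move=> E1 E2 D1 D2 H1 H2; apply: (@Kreach_trans _ v); apply: Kreach_arc; split => //.
- by rewrite (minn_idPr (ltnW H1)).
- by rewrite (minn_idPl (ltnW H2)).
Qed.

Lemma K2_step N : (forall a b, n - minn (pos a) (pos b) <= N -> Dd a b -> Kreach a b) ->
  forall a b, n - minn (pos a) (pos b) <= N.+1 -> Dd a b -> Kreach a b.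
Proof.
move=> IH a b Hab Dab.
have Hneq := Dd_neq Dab.
have Hlvl : forall x y, pos x < pos y -> pos x < pos y.
  by [].
case: (ltngtP (pos a) (pos b)) => [Hlt|Hlt|Heq]; last first.
- by move/negP: Hneq; case; apply/eqP; apply: (pos_inj Hall).
- (* pos b < pos a : induction on succS a *)
  move: Hab; rewrite (minn_idPr (ltnW Hlt)) => Hab.
  suff: forall M a, #|succS a| < M -> pos b < pos a -> Dd a b -> Kreach a b.
    by move/(_ #|succS a|.+1 a (ltnSn _) Hlt Dab).
  elim=> [//|M IHM] a' HM Hlt' Dab'.
  case: (supp' Dab') => [E|[v [Hv E1 E2 D1 D2]]].
    exact: base_K.
  have Hva : _ != v := Dd_neq D1. have Hvb : v != _ := Dd_neq D2.
  case: (ltngtP (pos v) (pos b)) => [Hvb'|Hvb'|Heq]; last first.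
  + by move/negP: Hvb; case; apply/eqP; apply: (pos_inj Hall).
  + have Hav : Kreach a' v.
      apply: IH => //.
      have := plt b; lia.
    apply: (Kreach_trans Hav); apply: IHM => //.
    by apply: leq_trans (succ_lt Hav) _.
  + apply: (low_K E1 E2 D1 D2) => //; exact: (ltn_trans Hvb').
- (* pos a < pos b : induction on predS b *)
  move: Hab; rewrite (minn_idPl (ltnW Hlt)) => Hab.
  suff: forall M b, #|predS b| < M -> pos a < pos b -> Dd a b -> Kreach a b.
    by move/(_ #|predS b|.+1 b (ltnSn _) Hlt Dab).
  elim=> [//|M IHM] b' HM Hlt' Dab'.
  case: (supp' Dab') => [E|[v [Hv E1 E2 D1 D2]]].
    exact: base_K.
  have Hva : _ != v := Dd_neq D1. have Hvb : v != _ := Dd_neq D2.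
  case: (ltngtP (pos v) (pos a)) => [Hva'|Hva'|Heq]; last first.
  + by move/negP: Hva; case; apply/eqP; apply: (pos_inj Hall); rewrite Heq.
  + have Hvb2 : Kreach v b'.
      apply: IH => //.
      have := plt a; lia.
    apply: (Kreach_trans _ Hvb2); apply: IHM => //.
    by apply: leq_trans (pred_lt Hvb2) _.
  + apply: (low_K E1 E2 D1 D2) => //; exact: (ltn_trans Hva').
Qed.

Lemma K2 a b : Dd a b -> Kreach a b.
Proof.
suff: forall N a b, n - minn (pos a) (pos b) <= N -> Dd a b -> Kreach a b.
  by move/(_ n a b (leq_subr _ _)).
elim=> [|N IH] a' b'.
  by rewrite leqn0 subn_eq0 => H; move: (leq_trans H (geq_minl _ _)); rewrite leqNgt plt.
exact: K2_step.
Qed.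

Lemma key p q : Dd p q -> Sx q.
Proof.
move=> Dpq; apply: NNPP => Hq.
suff: forall M x, #|succS x| < M -> Dd x q -> False.
  by move/(_ #|succS p|.+1 p (ltnSn _) Dpq).
elim=> [//|M IHM] x HM Dxq.
case: (H_supp Dxq) => [[_ Sq]|[v [_ [_ [D1 D2]]]]]; first by apply: Hq.
apply: (IHM v) => //.
by apply: leq_trans (succ_lt (K2 D1)) _.
Qed.
End Key.

Lemma Forall_consE (T : Type) (P : T -> Prop) x s :
  List.Forall P (x :: s) <-> P x /\ List.Forall P s.
Proof. by split => [H|[H1 H2]]; [inversion H | constructor]. Qed.

Lemma Forall_nilE (T : Type) (P : T -> Prop) : List.Forall P [::] <-> True.
Proof. by split => // _; constructor. Qed.

Lemma Forall_catE (T : Type) (P : T -> Prop) s1 s2 :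
  List.Forall P (s1 ++ s2) <-> List.Forall P s1 /\ List.Forall P s2.
Proof.
elim: s1 => [|x s1 IH] /=; first by rewrite Forall_nilE; tauto.
by rewrite !Forall_consE IH; tauto.
Qed.

Lemma Forall_mapE (T : eqType) (U : Type) (f : T -> U) (P : U -> Prop) s :
  List.Forall P (map f s) <-> (forall x, x \in s -> P (f x)).
Proof.
elim: s => [|x s IH] /=; first by rewrite Forall_nilE; split.
rewrite Forall_consE IH; split.
- by move=> [H1 H2] y; rewrite in_cons => /orP [/eqP ->|/H2].
- move=> H; split; first by apply: H; rewrite mem_head.
  by move=> y Hy; apply: H; rewrite in_cons Hy orbT.
Qed.

Lemma F0 (T : Type) (P : T -> Prop) : List.Forall P [::].
Proof. by constructor. Qed.
Lemma F1 (T : Type) (P : T -> Prop) x : P x -> List.Forall P [:: x].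
Proof. by move=> H; constructor => //; constructor. Qed.
Lemma F2 (T : Type) (P : T -> Prop) x y : P x -> P y -> List.Forall P [:: x; y].
Proof. by move=> H1 H2; constructor => //; apply: F1. Qed.
Lemma BS (T : Type) (I : T -> Prop) ch h pos neg :
  List.Forall I pos -> List.Forall (fun c => ~ I c) neg -> body_sat I (Rule ch h pos neg).
Proof. by split. Qed.

Section Main.
Variables (X A : finType) (pre add : A -> {set X}) (G : {set X}) (alpha : seq X).
Hypothesis Hu : uniq alpha.
Hypothesis Hall : forall x, x \in alpha.

Local Notation atm := (atom X A).
Local Notation PC := (Pc pre add G alpha).
Local Notation PD := (Pd pre add G alpha).
Local Notation STEPS := (steps pre add alpha).

Lemma Earcs_star p q : (p, q) \in Earcs pre add -> (p, q) \in Estar pre add alpha.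
Proof. by move=> H; rewrite inE H. Qed.

Lemma fill_star st p q : List.In st STEPS -> (p, q) \in fillin st.2 st.1 ->
  (p, q) \in Estar pre add alpha.
Proof.
move=> /In_mem Hst Hf; rewrite inE; apply/orP; right.
by apply/hasP; exists st.
Qed.

Section PdModel.
Variable M : interp atm.
Hypothesis HM : supported_model PD M.

Lemma Pd_notF : ~ M Ff.
Proof.
move=> Mf; have [r [[Pr [[Bp Bn] Ch]] Hr]] := (HM.2 Ff).1 Mf.
move: Pr => [[p E]|[[a [p [_ E]]]|[[p E]|[[a [p [q [_ [_ E]]]]]|[[p [q [_ E]]]|[[a [p [_ E]]]|[[g [_ E]]|[[st [p [q [_ [_ E]]]]]|[p [q [_ [_ E]]]]]]]]]]]];
  subst r; rewrite /normal /choice /= in Hr Bn; try discriminate.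
- by move/Forall_catE: Bn => [_ /Forall_consE [H _]].
- by move/Forall_consE: Bn => [H _].
Qed.

Lemma Pd_model_rule r : PD r -> rchoice r = false -> body_sat M r -> M (rhead r).
Proof. exact: HM.1. Qed.

Lemma Pd_AX p : M (AX p) -> exists a, p \in add a /\ M (Ws a p).
Proof.
move=> Mp; apply: NNPP => Hn.
apply: Pd_notF.
pose r : rule atm := normal Ff [:: AX p]
       ([seq Ws a p | a <- enum [pred a | p \in add a]] ++ [:: Ff]).
have Pr : PD r by right; right; left; exists p.
apply: (Pd_model_rule Pr) => //; split.
- by apply/Forall_consE; split => //; constructor.
- apply/Forall_catE; split.
  + apply/Forall_mapE => a; rewrite mem_enum inE => Ha Mw.
    by apply: Hn; exists a.
  + by apply/Forall_consE; split; [exact: Pd_notF | constructor].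
Qed.

Lemma Pd_Ws a p : M (Ws a p) -> p \in add a /\ M (AX p).
Proof.
move=> Mw; have [r [[Pr [[Bp Bn] Ch]] Hr]] := (HM.2 (Ws a p)).1 Mw.
move: Pr => [[p' E]|[[a' [p' [Hp E]]]|[[p' E]|[[a' [p' [q [_ [_ E]]]]]|[[p' [q [_ E]]]|[[a' [p' [_ E]]]|[[g [_ E]]|[[st [p' [q [_ [_ E]]]]]|[p' [q [_ [_ E]]]]]]]]]]]];
  subst r; rewrite /normal /choice /= in Hr Bp; try discriminate.
case: Hr => <- <-; split => //.
by move/Forall_consE: Bp => [].
Qed.

Lemma Pd_AA a : M (AA a) <-> exists p, p \in add a /\ M (Ws a p).
Proof.
split.
- move=> Ma; have [r [[Pr [[Bp Bn] Ch]] Hr]] := (HM.2 (AA a)).1 Ma.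
  move: Pr => [[p' E]|[[a' [p' [Hp E]]]|[[p' E]|[[a' [p' [q [_ [_ E]]]]]|[[p' [q [_ E]]]|[[a' [p' [Hp E]]]|[[g [_ E]]|[[st [p' [q [_ [_ E]]]]]|[p' [q [_ [_ E]]]]]]]]]]]];
    subst r; rewrite /normal /choice /= in Hr Bp; try discriminate.
  case: Hr => <-; exists p'; split => //.
  by move/Forall_consE: Bp => [].
- move=> [p [Hp Mw]].
  have Pr : PD (normal (AA a) [:: Ws a p] [::]).
    by do 5 right; left; exists a, p.
  apply: (Pd_model_rule Pr) => //; split => //.
  by apply/Forall_consE; split => //; constructor.
Qed.

Lemma Pd_Dep p q : M (Dep p q) ->
  (exists a, [/\ p \in add a, q \in pre a & M (Ws a p)]) \/
  (exists st, [/\ List.In st STEPS, (p, q) \in fillin st.2 st.1, M (Dep p st.1) & M (Dep st.1 q)]).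
Proof.
move=> Md; have [r [[Pr [[Bp Bn] Ch]] Hr]] := (HM.2 (Dep p q)).1 Md.
move: Pr => [[p' E]|[[a' [p' [Hp E]]]|[[p' E]|[[a' [p' [q' [Hp [Hq E]]]]]|[[p' [q' [_ E]]]|[[a' [p' [Hp E]]]|[[g [_ E]]|[[st [p' [q' [Hst [Hf E]]]]]|[p' [q' [_ [_ E]]]]]]]]]]]];
  subst r; rewrite /normal /choice /= in Hr Bp; try discriminate.
- case: Hr => <- <-; left; exists a'; split => //.
  by move/Forall_consE: Bp => [].
- case: Hr => <- <-; right; exists st; split => //.
  + by move/Forall_consE: Bp => [].
  + by move/Forall_consE: Bp => [_ /Forall_consE []].
Qed.

Lemma Pd_D4 a p q : M (Ws a p) -> p \in add a -> q \in pre a -> M (Dep p q).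
Proof.
move=> Mw Hp Hq.
have Pr : PD (normal (Dep p q) [:: Ws a p] [::]).
  by do 3 right; left; exists a, p, q.
apply: (Pd_model_rule Pr) => //; split => //.
by apply/Forall_consE; split => //; constructor.
Qed.

Lemma Pd_D5 p q : M (Dep p q) -> (p, q) \in Earcs pre add -> M (AX q).
Proof.
move=> Md He.
have Pr : PD (normal (AX q) [:: Dep p q] [::]).
  by do 4 right; left; exists p, q.
apply: (Pd_model_rule Pr) => //; split => //.
by apply/Forall_consE; split => //; constructor.
Qed.

Lemma Pd_G g : g \in G -> M (AX g).
Proof.
move=> Hg; apply: NNPP => Hn.
have Pr : PD (normal (AX g) [::] [:: AX g]).
  by do 6 right; left; exists g.
apply: (Hn); apply: (Pd_model_rule Pr) => //; split; first by constructor.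
by apply/Forall_consE; split => //; constructor.
Qed.

Lemma Pd_to_Pc : supported_model PC M.
Proof.
have Hmod : is_model PC M.
  move=> r Pr Ch [Bp Bn].
  move: Pr => [[p [q [_ E]]]|[[a [p [_ E]]]|[[a [p [Hp [E|E]]]]|[[g [Hg E]]|[HC|HC]]]]].
  - by subst r.
  - by subst r.
  - subst r; move: Bp => /= /Forall_consE [Mw _].
    by have [_ ?] := Pd_Ws Mw.
  - subst r; move: Bp => /= /Forall_consE [Mw _].
    by apply/Pd_AA; exists p.
  - by subst r; apply: Pd_G.
  - by apply: (Pd_model_rule (r := r)) => //; do 7 right; left.
  - by apply: (Pd_model_rule (r := r)) => //; do 8 right.
split => // x; split; last first.
  move=> [r [[Pr [Bs [Ch|Mh]]] <-]] //.
  exact: Hmod.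
case: x => [p|a|p q|a p|] Mx.
- have [a [Hp Mw]] := Pd_AX Mx.
  exists (normal (AX p) [:: Ws a p] [::]); split => //; split.
    by right; right; left; exists a, p; split => //; left.
  split; last by left.
  by apply: BS; [apply: F1 | apply: F0].
- have [p [Hp Mw]] := (Pd_AA a).1 Mx.
  exists (normal (AA a) [:: Ws a p] [::]); split => //; split.
    by right; right; left; exists a, p; split => //; right.
  split; last by left.
  by apply: BS; [apply: F1 | apply: F0].
- case: (Pd_Dep Mx) => [[a [Hp Hq Mw]]|[st [Hst Hf M1 M2]]].
  + have He : (p, q) \in Earcs pre add by rewrite inE; apply/existsP; exists a; rewrite Hp Hq.
    exists (choice (Dep p q) [:: AX q] [::]); split => //; split.
      by left; exists p, q.
    split; last by right.
    by apply: BS; [apply: F1; exact: (Pd_D5 Mx He) | apply: F0].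
  + exists (normal (Dep p q) [:: Dep p st.1; Dep st.1 q] [::]); split => //; split.
      by do 4 right; left; exists st, p, q.
    split; last by left.
    by apply: BS; [apply: F2 | apply: F0].
- have [Hp MX] := Pd_Ws Mx.
  exists (choice (Ws a p) [seq Dep p q | q <- enum (pre a)] [::]); split => //; split.
    by right; left; exists a, p.
  split; last by right.
  apply: BS; last by apply: F0.
  apply/Forall_mapE => q; rewrite mem_enum => Hq.
  exact: (Pd_D4 Mx Hp Hq).
- by case: (Pd_notF Mx).
Qed.

End PdModel.

Section PcModel.
Variable N : interp atm.
Hypothesis HN : supported_model PC N.

Lemma Pc_model_rule r : PC r -> rchoice r = false -> body_sat N r -> N (rhead r).
Proof. exact: HN.1. Qed.

Lemma Pc_notF : ~ N Ff.
Proof.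
move=> Nf; have [r [[Pr [[Bp Bn] Ch]] Hr]] := (HN.2 Ff).1 Nf.
move: Pr => [[p' [q' [Hpq E]]]|[[a' [p' [Hp E]]]|[[a' [p' [Hp [E|E]]]]|[[g [Hg E]]|[[st [p' [q' [Hst [Hf E]]]]]|[p' [q' [_ [_ E]]]]]]]]];
  subst r; rewrite /normal /choice /= in Hr Bn; try discriminate.
by move/Forall_consE: Bn => [H _].
Qed.

Lemma Pc_AX p : N (AX p) -> exists a, p \in add a /\ N (Ws a p).
Proof.
move=> Np; have [r [[Pr [[Bp Bn] Ch]] Hr]] := (HN.2 (AX p)).1 Np.
move: Pr => [[p' [q' [Hpq E]]]|[[a' [p' [Hp E]]]|[[a' [p' [Hp [E|E]]]]|[[g [Hg E]]|[[st [p' [q' [Hst [Hf E]]]]]|[p' [q' [_ [_ E]]]]]]]]];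
  subst r; rewrite /normal /choice /= in Hr Bp Bn; try discriminate.
- case: Hr => <-; exists a'; split => //.
  by move/Forall_consE: Bp => [].
- case: Hr => Eg; subst g.
  by move/Forall_consE: Bn => [H _].
Qed.

Lemma Pc_Ws a p : N (Ws a p) -> p \in add a /\ (forall q, q \in pre a -> N (Dep p q)).
Proof.
move=> Nw; have [r [[Pr [[Bp Bn] Ch]] Hr]] := (HN.2 (Ws a p)).1 Nw.
move: Pr => [[p' [q' [Hpq E]]]|[[a' [p' [Hp E]]]|[[a' [p' [Hp [E|E]]]]|[[g [Hg E]]|[[st [p' [q' [Hst [Hf E]]]]]|[p' [q' [_ [_ E]]]]]]]]];
  subst r; rewrite /normal /choice /= in Hr Bp Bn; try discriminate.
case: Hr => <- <-; split => //.
move=> q Hq; move/Forall_mapE: Bp; apply.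
by rewrite mem_enum.
Qed.

Lemma Pc_WsAX a p : N (Ws a p) -> N (AX p).
Proof.
move=> Nw; have [Hp _] := Pc_Ws Nw.
have Pr : PC (normal (AX p) [:: Ws a p] [::]).
  by right; right; left; exists a, p; split => //; left.
by apply: (Pc_model_rule Pr) => //; apply: BS; [apply: F1 | apply: F0].
Qed.

Lemma Pc_AA a : N (AA a) <-> exists p, p \in add a /\ N (Ws a p).
Proof.
split.
- move=> Na; have [r [[Pr [[Bp Bn] Ch]] Hr]] := (HN.2 (AA a)).1 Na.
  move: Pr => [[p' [q' [Hpq E]]]|[[a' [p' [Hp E]]]|[[a' [p' [Hp [E|E]]]]|[[g [Hg E]]|[[st [p' [q' [Hst [Hf E]]]]]|[p' [q' [_ [_ E]]]]]]]]];
    subst r; rewrite /normal /choice /= in Hr Bp Bn; try discriminate.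
  case: Hr => <-; exists p'; split => //.
  by move/Forall_consE: Bp => [].
- move=> [p [Hp Nw]].
  have Pr : PC (normal (AA a) [:: Ws a p] [::]).
    by right; right; left; exists a, p; split => //; right.
  by apply: (Pc_model_rule Pr) => //; apply: BS; [apply: F1 | apply: F0].
Qed.

Lemma Pc_Dep p q : N (Dep p q) ->
  ((p, q) \in Earcs pre add /\ N (AX q)) \/
  (exists st, [/\ List.In st STEPS, (p, q) \in fillin st.2 st.1, N (Dep p st.1) & N (Dep st.1 q)]).
Proof.
move=> Nd; have [r [[Pr [[Bp Bn] Ch]] Hr]] := (HN.2 (Dep p q)).1 Nd.
move: Pr => [[p' [q' [Hpq E]]]|[[a' [p' [Hp E]]]|[[a' [p' [Hp [E|E]]]]|[[g [Hg E]]|[[st [p' [q' [Hst [Hf E]]]]]|[p' [q' [_ [_ E]]]]]]]]];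
  subst r; rewrite /normal /choice /= in Hr Bp Bn; try discriminate.
- case: Hr => <- <-; left; split => //.
  by move/Forall_consE: Bp => [].
- case: Hr => <- <-; right; exists st; split => //.
  + by move/Forall_consE: Bp => [].
  + by move/Forall_consE: Bp => [_ /Forall_consE []].
Qed.

Lemma Pc_G g : g \in G -> N (AX g).
Proof.
move=> Hg; apply: NNPP => Hn.
have Pr : PC (normal (AX g) [::] [:: AX g]).
  by do 3 right; left; exists g.
apply: (Hn); apply: (Pc_model_rule Pr) => //.
by apply: BS; [apply: F0 | apply: F1].
Qed.

Lemma Pc_C5 st p q : List.In st STEPS -> (p, q) \in fillin st.2 st.1 ->
  N (Dep p st.1) -> N (Dep st.1 q) -> N (Dep p q).
Proof.
move=> Hst Hf N1 N2.
have Pr : PC (normal (Dep p q) [:: Dep p st.1; Dep st.1 q] [::]).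
  by do 4 right; left; exists st, p, q.
by apply: (Pc_model_rule Pr) => //; apply: BS; [apply: F2 | apply: F0].
Qed.

Lemma Pc_star p q : N (Dep p q) -> (p, q) \in Estar pre add alpha.
Proof.
case/Pc_Dep => [[He _]|[st [Hst Hf _ _]]].
- exact: Earcs_star.
- exact: (fill_star Hst Hf).
Qed.

Lemma Pc_no2 p q : N (Dep p q) -> N (Dep q p) -> False.
Proof.
move=> N1 N2; apply: Pc_notF.
have Pr : PC (normal Ff [:: Dep p q; Dep q p] [:: Ff]).
  by do 5 right; exists p, q; split; [exact: Pc_star | split; [exact: Pc_star|]].
apply: (Pc_model_rule Pr) => //; apply: BS; [exact: F2 | apply: F1; exact: Pc_notF].
Qed.

Lemma Pc_key p q : N (Dep p q) -> N (AX q).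
Proof.
apply: (key (pre := pre) (add := add) Hu Hall (Dd := fun p q => N (Dep p q)) (Sx := fun q => N (AX q))).
- move=> v p' q' Hv Hf N1 N2.
  exact: (Pc_C5 (step_mk pre add Hall Hv) Hf N1 N2).
- exact: Pc_no2.
- move=> p' q' /Pc_Dep [[He Nq]|[st [Hst Hf N1 N2]]]; first by left.
  right; have [Hv E] := step_spec Hu Hst.
  exists st.1; split => //; split; last by split.
  by rewrite -E.
Qed.


Inductive Ld : X -> X -> Prop :=
| Ldb a p q : p \in add a -> q \in pre a -> N (Ws a p) -> Ld p q
| Lds st p q : List.In st STEPS -> (p, q) \in fillin st.2 st.1 ->
    Ld p st.1 -> Ld st.1 q -> Ld p q.

Lemma Ld_N p q : Ld p q -> N (Dep p q).
Proof.
elim=> [a p' q' Hp Hq Nw|st p' q' Hst Hf _ N1 _ N2].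
- by have [_ H] := Pc_Ws Nw; apply: H.
- exact: (Pc_C5 Hst Hf N1 N2).
Qed.

Definition Mof : interp atm := fun x =>
  match x with
  | AX p => N (AX p)
  | AA a => N (AA a)
  | Dep p q => Ld p q
  | Ws a p => N (Ws a p)
  | Ff => False
  end.

Lemma Pc_to_Pd : supported_model PD Mof.
Proof.
have Hmod : is_model PD Mof.
  move=> r Pr Ch [Bp Bn].
  move: Pr => [[p E]|[[a [p [_ E]]]|[[p E]|[[a [p [q [Hp [Hq E]]]]]|[[p [q [He E]]]|[[a [p [Hp E]]]|[[g [Hg E]]|[HC|HC]]]]]]]].
  - by subst r.
  - by subst r.
  - subst r; move: Bp Bn => /= /Forall_consE [Mp _] /Forall_catE [Bn _].
    have [a [Hp Nw]] := Pc_AX Mp.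
    move/Forall_mapE: Bn => /(_ a); rewrite mem_enum inE => /(_ Hp).
    by [].
  - subst r; move: Bp => /= /Forall_consE [Mw _].
    exact: (Ldb Hp Hq Mw).
  - subst r; move: Bp => /= /Forall_consE [Ml _].
    exact: (Pc_key (Ld_N Ml)).
  - subst r; move: Bp => /= /Forall_consE [Mw _].
    by apply/Pc_AA; exists p.
  - by subst r; apply: Pc_G.
  - move: HC => [st [p [q [Hst [Hf E]]]]]; subst r.
    move: Bp => /= /Forall_consE [M1 /Forall_consE [M2 _]].
    exact: (Lds Hst Hf M1 M2).
  - move: HC => [p [q [_ [_ E]]]]; subst r.
    move: Bp => /= /Forall_consE [M1 /Forall_consE [M2 _]].
    exact: (Pc_no2 (Ld_N M1) (Ld_N M2)).
split => // x; split; last first.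
  move=> [r [[Pr [Bs [Ch|Mh]]] <-]] //.
  exact: Hmod.
case: x => [p|a|p q|a p|] Mx.
- exists (choice (AX p) [::] [::]); split => //; split; first by left; exists p.
  split; last by right.
  by apply: BS; apply: F0.
- have [p [Hp Nw]] := (Pc_AA a).1 Mx.
  exists (normal (AA a) [:: Ws a p] [::]); split => //; split.
    by do 5 right; left; exists a, p.
  split; last by left.
  by apply: BS; [apply: F1 | apply: F0].
- case: Mx => [a p' q' Hp Hq Nw|st p' q' Hst Hf M1 M2].
  + exists (normal (Dep p' q') [:: Ws a p'] [::]); split => //; split.
      by do 3 right; left; exists a, p', q'.
    split; last by left.
    by apply: BS; [apply: F1 | apply: F0].
  + exists (normal (Dep p' q') [:: Dep p' st.1; Dep st.1 q'] [::]); split => //; split.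
      by do 7 right; left; exists st, p', q'.
    split; last by left.
    by apply: BS; [apply: F2 | apply: F0].
- have [Hp _] := Pc_Ws Mx.
  exists (choice (Ws a p) [:: AX p] [::]); split => //; split.
    by right; left; exists a, p.
  split; last by right.
  by apply: BS; [apply: F1; exact: (Pc_WsAX Mx) | apply: F0].
- by [].
Qed.

End PcModel.
End Main.

Theorem theorem3 (X A : finType) (pre add : A -> {set X}) (G : {set X})
    (alpha : seq X) (Halpha_uniq : uniq alpha) (Halpha_all : forall x, x \in alpha)
    (A' : {set A}) :
  (exists M : interp (atom X A),
      supported_model (Pd pre add G alpha) M /\ (forall a, a \in A' <-> M (AA a)))
  <->
  (exists N : interp (atom X A),
      supported_model (Pc pre add G alpha) N /\ (forall a, a \in A' <-> N (AA a))).
Proof.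
split.
- move=> [M [HM HA]]; exists M; split => //.
  exact: Pd_to_Pc.
- move=> [N [HN HA]]; exists (@Mof _ _ pre add alpha N); split.
  + exact: (Pc_to_Pd Halpha_uniq Halpha_all HN).
  + by move=> a; rewrite HA.
Qed.
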